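(* Let $\mathcal{D}\subseteq[0,1]$ be a two-outcome forecast domain (a non-degenerate interval, identified with the probability of the first outcome). A pooling operator $\oplus$ on $\mathcal{D}$ (a binary operator on weighted forecasts) satisfies the following six axioms if and only if there is a continuous, strictly increasing function $g:\mathcal{D}\to\mathbb{R}$ such that $\oplus=\oplus_g$ (i.e., for all weighted forecasts $\Pi_1,\dots,\Pi_m$, $\Pi_1\oplus\cdots\oplus\Pi_m=\bigoplus_{g,i=1}^m\Pi_i$): (1) Weight additivity: $\mathrm{wt}(\Pi_1\oplus\Pi_2)=\mathrm{wt}(\Pi_1)+\mathrm{wt}(\Pi_2)$ for all $\Pi_1,\Pi_2$. (2) Commutativity: $\Pi_1\oplus\Pi_2=\Pi_2\oplus\Pi_1$ for all $\Pi_1,\Pi_2$. (3) Associativity: $\Pi_1\oplus(\Pi_2\oplus\Pi_3)=(\Pi_1\oplus\Pi_2)\oplus\Pi_3$ for all $\Pi_1,\Pi_2,\Pi_3$. (4) Continuity: for all $p_1,p_2\in\mathcal{D}$, $\mathrm{pr}((p_1,w_1)\oplus(p_2,w_2))$ is a continuous function of $(w_1,w_2)$ on $\mathbb{R}_{\ge0}^2\setminus\{(0,0)\}$, with the convention $(p,w)\oplus(q,0)=(q,0)\oplus(p,w)=(p,w)$. (5) Idempotence: if $\mathrm{pr}(\Pi_1)=\mathrm{pr}(\Pi_2)$ then $\mathrm{pr}(\Pi_1\oplus\Pi_2)=\mathrm{pr}(\Pi_1)$. (6) Monotonicity: for every $w>0$ and $p_1>p_2$ in $\mathcal{D}$, the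 quantity $\mathrm{pr}((p_1,x)\oplus(p_2,w-x))$ is a strictly increasing function of $x\in(0,w)$.
   Context: A weighted forecast is a pair $\Pi=(p,w)\in\mathcal{D}\times\mathbb{R}_{>0}$, with $\mathrm{pr}(\Pi):=p$ and $\mathrm{wt}(\Pi):=w$. A pooling operator is a binary operator on weighted forecasts; when associative, $\Pi_1\oplus\cdots\oplus\Pi_m$ is well defined without parentheses. For a continuous strictly increasing $g:\mathcal{D}\to\mathbb{R}$, the quasi-arithmetic pool with respect to $g$ is \[\bigoplus_{g,\,i=1}^m (p_i,w_i):=\Big(g^{-1}\Big(\tfrac{\sum_i w_i g(p_i)}{\sum_i w_i}\Big),\ \sum_i w_i\Big).\] *)

(* Defs.v *)
From HB Require Import structures.
From mathcomp Require Import all_boot all_order all_algebra.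
From mathcomp Require Import all_classical all_reals all_analysis.
Set Implicit Arguments. Unset Strict Implicit. Unset Printing Implicit Defensive.
Import Order.TTheory GRing.Theory Num.Theory.
Import numFieldNormedType.Exports.
Local Open Scope classical_set_scope.
Local Open Scope ring_scope.

Section Pooling.
Variable R : realType.

Definition forecast_domain (D : set R) : Prop :=
  is_interval D /\ D `<=` `[0, 1] /\ exists x y, D x /\ D y /\ x < y.

(* A weighted forecast (p, w) with p in D and w > 0; pr = .1, wt = .2 *)
Definition wforecast (D : set R) (P : R * R) : Prop := D P.1 /\ 0 < P.2.

Definition pooling_op (D : set R) (op : R * R -> R * R -> R * R) : Prop :=
  forall P Q, wforecast D P -> wforecast D Q -> wforecast D (op P Q).

Definition pool_all (op : R * R -> R * R -> R * R) (P : R * R) (s : seq (R * R)) :=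
  foldl op P s.

(* inverse of g on D (default 0 outside g(D)) *)
Definition inv_on (D : set R) (g : R -> R) (y : R) : R :=
  xget 0 [set x | D x /\ g x = y].

Definition qa_pool (D : set R) (g : R -> R) (s : seq (R * R)) : R * R :=
  (inv_on D g ((\sum_(P <- s) P.2 * g P.1) / (\sum_(P <- s) P.2)),
   \sum_(P <- s) P.2).

Definition pool_weight_additive (D : set R) (op : R * R -> R * R -> R * R) := forall P Q, wforecast D P -> wforecast D Q ->
  (op P Q).2 = P.2 + Q.2.
Definition pool_commutative_op (D : set R) (op : R * R -> R * R -> R * R) := forall P Q, wforecast D P -> wforecast D Q ->
  op P Q = op Q P.
Definition pool_associative_op (D : set R) (op : R * R -> R * R -> R * R) :=
  forall P Q S, wforecast D P -> wforecast D Q -> wforecast D S ->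
  op P (op Q S) = op (op P Q) S.

(* pr((p1,w1) (+) (p2,w2)) extended by the zero-weight convention *)
Definition pr_ext (op : R * R -> R * R -> R * R) (p1 p2 : R) (w : R * R) : R :=
  if w.2 == 0 then p1 else if w.1 == 0 then p2 else (op (p1, w.1) (p2, w.2)).1.

Definition pool_continuous_op (D : set R) (op : R * R -> R * R -> R * R) := forall p1 p2, D p1 -> D p2 ->
  {within [set w : R * R | 0 <= w.1 /\ 0 <= w.2 /\ w != (0, 0)],
     continuous (pr_ext op p1 p2)}.

Definition pool_idempotent_op (D : set R) (op : R * R -> R * R -> R * R) := forall P Q, wforecast D P -> wforecast D Q ->
  P.1 = Q.1 -> (op P Q).1 = P.1.

Definition pool_monotone_op (D : set R) (op : R * R -> R * R -> R * R) :=
  forall w p1 p2, 0 < w -> D p1 -> D p2 -> p2 < p1 ->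
  forall x y, 0 < x -> x < y -> y < w ->
    (op (p1, x) (p2, w - x)).1 < (op (p1, y) (p2, w - y)).1.

End Pooling.

(* Main.v *)
Require Import Defs.
From HB Require Import structures.
From mathcomp Require Import all_boot all_order all_algebra.
From mathcomp Require Import all_classical all_reals all_analysis.
From mathcomp Require Import ring lra.
Import Order.TTheory GRing.Theory Num.Theory.
Import numFieldNormedType.Exports.
Local Open Scope classical_set_scope.
Local Open Scope ring_scope.
Set Implicit Arguments. Unset Strict Implicit. Unset Printing Implicit Defensive.
Section Topo.
Variable R : realType.

Lemma within_comp {T U : topologicalType} (A : set T) (B : set U) (f : T -> U) (g : U -> R) :
  {within A, continuous f} -> (forall x, A x -> B (f x)) -> {within B, continuous g} ->
  {within A, continuous (g \o f)}.
Proof.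
move=> /subspace_continuousP cf AB /subspace_continuousP cg.
apply/subspace_continuousP => x Ax.
have H : f @ within A (nbhs x) --> within B (nbhs (f x)).
  move=> W /= BW.
  have := cf x Ax [set y | B y -> W y] BW.
  move=> H0.
  have HA : within A (nbhs x) A by apply: withinT.
  apply: (@filterS2 _ (within A (nbhs x)) _ (f @^-1` [set y | B y -> W y]) A (f @^-1` W) _ H0 HA).
  move=> t /= H1 H2; exact: (H1 (AB _ H2)).
by move=> W /(cg _ (AB _ Ax)) /H.
Qed.

Lemma within_epsdelta (A : set R) (f : R -> R) :
  (forall x, A x -> forall e, 0 < e -> exists2 d, 0 < d & forall y, A y -> `|x - y| < d -> `|f x - f y| < e) ->
  {within A, continuous f}.
Proof.
move=> H; apply/subspace_continuousP => x Ax.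
apply/cvgrPdist_lt => e e0.
have [d d0 Hd] := H x Ax e e0.
rewrite /within /=. apply/nbhs_ballP; exists d => // y /= Bxy Ay.
by apply: Hd.
Qed.
End Topo.
Section Topo2.
Variable R : realType.

Lemma mono_right (A : set R) (f : R -> R) x e :
  (forall x y, A x -> A y -> x < y -> f x < f y) ->
  (forall x y v, A x -> A y -> f x < v < f y -> exists2 z, A z & f z = v) ->
  A x -> 0 < e ->
  exists2 d, 0 < d & forall y, A y -> x < y < x + d -> f y < f x + e.
Proof.
move=> mono conv Ax e0.
case: (pselect (exists2 y, A y & x < y)) => [[y Ay xy]|none]; last first.
  exists 1 => // y Ay /andP[xy _]; exfalso; apply: none; by exists y.
case: (ltP (f y) (f x + e)) => fy.
  exists (y - x); first by rewrite subr_gt0.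
  move=> y' Ay' /andP[_ h]; have : y' < y by lra.
  move=> /(mono _ _ Ay' Ay) => h2; lra.
have [z Az fz] : exists2 z, A z & f z = f x + e / 2.
  apply: (conv x y) => //; apply/andP; split; lra.
have xz : x < z.
  case: (ltP x z) => // zx; exfalso.
  move: zx; rewrite le_eqVlt => /orP[/eqP zx|zx].
    move: fz; rewrite zx; lra.
  have := mono _ _ Az Ax zx; lra.
exists (z - x); first by rewrite subr_gt0.
move=> y' Ay' /andP[_ h]; have : y' < z by lra.
move=> /(mono _ _ Ay' Az) => h2; lra.
Qed.

Lemma mono_left (A : set R) (f : R -> R) x e :
  (forall x y, A x -> A y -> x < y -> f x < f y) ->
  (forall x y v, A x -> A y -> f x < v < f y -> exists2 z, A z & f z = v) ->
  A x -> 0 < e ->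
  exists2 d, 0 < d & forall y, A y -> x - d < y < x -> f x - e < f y.
Proof.
move=> mono conv Ax e0.
case: (pselect (exists2 y, A y & y < x)) => [[y Ay xy]|none]; last first.
  exists 1 => // y Ay /andP[_ xy]; exfalso; apply: none; by exists y.
case: (ltP (f x - e) (f y)) => fy.
  exists (x - y); first by rewrite subr_gt0.
  move=> y' Ay' /andP[h _]; have : y < y' by lra.
  move=> /(mono _ _ Ay Ay') => h2; lra.
have [z Az fz] : exists2 z, A z & f z = f x - e / 2.
  apply: (conv y x) => //; apply/andP; split; lra.
have xz : z < x.
  case: (ltP z x) => // zx; exfalso.
  move: zx; rewrite le_eqVlt => /orP[/eqP zx|zx].
    move: fz; rewrite zx; lra.
  have := mono _ _ Ax Az zx; lra.
exists (x - z); first by rewrite subr_gt0.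
move=> y' Ay' /andP[h _]; have : z < y' by lra.
move=> /(mono _ _ Az Ay') => h2; lra.
Qed.

Lemma mono_conv_cont (A : set R) (f : R -> R) :
  (forall x y, A x -> A y -> x < y -> f x < f y) ->
  (forall x y v, A x -> A y -> f x < v < f y -> exists2 z, A z & f z = v) ->
  {within A, continuous f}.
Proof.
move=> mono conv; apply: within_epsdelta => x Ax e e0.
have [dR dR0 HR] := mono_right mono conv Ax e0.
have [dL dL0 HL] := mono_left mono conv Ax e0.
exists (Num.min dR dL); first by rewrite lt_min dR0 dL0.
have : Num.min dR dL <= dR /\ Num.min dR dL <= dL.
  by split; rewrite ge_min lexx ?orbT.
move=> [m1 m2] y Ay; rewrite ltr_distlC => /andP[h1 h2].
rewrite ltr_distlC.
case: (ltgtP x y) => xy.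
- have := HR y Ay ltac:(apply/andP; split; lra).
  have := mono _ _ Ax Ay xy => h3 h4; apply/andP; split; lra.
- have := HL y Ay ltac:(apply/andP; split; lra).
  have := mono _ _ Ay Ax xy => h3 h4; apply/andP; split; lra.
- rewrite xy; apply/andP; split; lra.
Qed.
End Topo2.
Section Topo3.
Variable R : realType.

Lemma itv_sub (a b c d : R) : c <= a -> b <= d -> `[a, b] `<=` `[c, d].
Proof.
move=> ca bd z /=; rewrite !in_itv /= => /andP[h1 h2]; apply/andP; split; lra.
Qed.

Lemma IVT' (f : R -> R) a b v : a <= b -> {within `[a, b], continuous f} ->
  (f a <= v <= f b) \/ (f b <= v <= f a) -> exists2 c, a <= c <= b & f c = v.
Proof.
move=> ab cf hv.
have hv' : Num.min (f a) (f b) <= v <= Num.max (f a) (f b).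
  by rewrite ge_min le_max; case: hv => H; case/andP: H => h1 h2; rewrite h1 h2 ?orbT.
have [c hc fc] := IVT ab cf hv'.
by exists c => //; move: hc; rewrite in_itv.
Qed.

End Topo3.
Section Topo3b.
Variable R : realType.

Lemma strict_closed (f : R -> R) w : 0 < w -> {within `[0, w], continuous f} ->
  (forall x y, 0 < x -> x < y -> y < w -> f x < f y) ->
  forall x y, 0 <= x -> x < y -> y <= w -> f x < f y.
Proof.
move=> w0 cf mono.
have sub a b : 0 <= a -> b <= w -> {within `[a, b], continuous f}.
  by move=> ha hb; apply: continuous_subspaceW cf; apply: itv_sub.
have left u : 0 < u -> u < w -> f 0 < f u.
  move=> u0 uw; case: (ltP (f 0) (f u)) => // hu; exfalso.
  have h1 : f (u / 2) < f u by apply: mono; lra.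
  have h2 : f (u / 4) < f (u / 2) by apply: mono; lra.
  have e1 : 0 <= u / 4 by lra.
  have e2 : u / 4 <= w by lra.
  have e3 : f (u / 4) <= f (u / 2) <= f 0 by apply/andP; split; lra.
  have [c /andP[c1 c2] fc] := IVT' e1 (sub _ _ (lexx 0) e2) (or_intror e3).
  case: (eqVneq c 0) => [c0|cn].
    by move: fc; rewrite c0 => fc; lra.
  have c0 : 0 < c by rewrite lt_def cn c1.
  have e4 : c < u / 2 by lra.
  have e5 : u / 2 < w by lra.
  have := mono c (u / 2) c0 e4 e5; lra.
have right u : 0 < u -> u < w -> f u < f w.
  move=> u0 uw; case: (ltP (f u) (f w)) => // hu; exfalso.
  pose m2 := (u + w) / 2; pose m3 := (m2 + w) / 2.
  have em2 : u < m2 /\ m2 < m3 /\ m3 < w by rewrite /m3 /m2; lra.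
  move: em2 => [em1 [em2 em3]].
  have h1 : f u < f m2 by apply: mono; lra.
  have h2 : f m2 < f m3 by apply: mono; lra.
  have e1 : m3 <= w by lra.
  have e2 : 0 <= m3 by lra.
  have e3 : f w <= f m2 <= f m3 by apply/andP; split; lra.
  have [c /andP[c1 c2] fc] := IVT' e1 (sub _ _ e2 (lexx w)) (or_intror e3).
  case: (eqVneq c w) => [cw|cn].
    by move: fc; rewrite cw => fc; lra.
  have cw : c < w by rewrite lt_def eq_sym cn c2.
  have e4 : 0 < m2 by lra.
  have e5 : m2 < c by lra.
  have := mono m2 c e4 e5 cw; lra.
move=> x y x0 xy yw.
case: (eqVneq x 0) => [->|xn]; case: (eqVneq y w) => [->|yn].
- have e1 : 0 < w / 2 by lra.
  have e2 : w / 2 < w by lra.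
  have := left _ e1 e2; have := right _ e1 e2; lra.
- apply: left; first lra.
  by rewrite lt_def eq_sym yn; lra.
- apply: right; last lra.
  by rewrite lt_def xn; lra.
- apply: mono => //; first by rewrite lt_def xn.
  by rewrite lt_def eq_sym yn.
Qed.
End Topo3b.
Lemma rat_pos (R : realType) (q : rat) : 0 < ratr q :> R ->
  exists n k : nat, ratr q = n.+1%:R / k.+1%:R :> R.
Proof.
move=> q0.
have n0 : 0 < numq q by rewrite numq_gt0 -(ltr0q R).
have d0 := denq_gt0 q.
rewrite /ratr; move: n0 d0.
case: (numq q) => [[|n]|n] //; case: (denq q) => [[|k]|k] // _ _.
by exists n, k.
Qed.
Section Forward.
Variable R : realType.
Variable D : set R.
Variable op : R * R -> R * R -> R * R.
Hypothesis HD : forecast_domain D.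
Hypothesis Hpool : pooling_op D op.
Hypothesis Hadd : pool_weight_additive D op.
Hypothesis Hcomm : pool_commutative_op D op.
Hypothesis Hassoc : pool_associative_op D op.
Hypothesis Hcont : pool_continuous_op D op.
Hypothesis Hidem : pool_idempotent_op D op.
Hypothesis Hmono : pool_monotone_op D op.

Definition op0 (P Q : R * R) := if P.2 == 0 then Q else if Q.2 == 0 then P else op P Q.
Definition wf0 (P : R * R) := D P.1 /\ 0 <= P.2.

Lemma wf0_pos P : wf0 P -> P.2 != 0 -> wforecast D P.
Proof. by move=> [h1 h2] h3; split => //; rewrite lt_def h3 h2. Qed.

Lemma op0_wf0 P Q : wf0 P -> wf0 Q -> wf0 (op0 P Q).
Proof.
rewrite /op0 => hP hQ; case: eqP => // /eqP p0; case: eqP => // /eqP q0.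
have [h1 h2] := Hpool (wf0_pos hP p0) (wf0_pos hQ q0); split => //; exact: ltW.
Qed.

Lemma op0_w P Q : wf0 P -> wf0 Q -> (op0 P Q).2 = P.2 + Q.2.
Proof.
rewrite /op0 => hP hQ; case: eqP => [->|/eqP p0]; first by rewrite add0r.
case: eqP => [->|/eqP q0]; first by rewrite addr0.
exact: Hadd (wf0_pos hP p0) (wf0_pos hQ q0).
Qed.

Lemma op0_pos P Q : wf0 P -> wf0 Q -> P.2 != 0 -> (op0 P Q).2 != 0.
Proof.
move=> hP hQ p0; rewrite op0_w //; case: hP => _ h1; case: hQ => _ h2.
have : 0 < P.2 by rewrite lt_def p0 h1.
  move=> h3; rewrite lt0r_neq0 //; lra.
Qed.

Lemma op0_l0 P Q : P.2 = 0 -> op0 P Q = Q.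
Proof. by rewrite /op0 => ->; rewrite eqxx. Qed.
Lemma op0_r0 P Q : P.2 != 0 -> Q.2 = 0 -> op0 P Q = P.
Proof. by rewrite /op0 => /negbTE -> ->; rewrite eqxx. Qed.
Lemma op0_op P Q : P.2 != 0 -> Q.2 != 0 -> op0 P Q = op P Q.
Proof. by rewrite /op0 => /negbTE -> /negbTE ->. Qed.

Lemma op0_assoc P Q S : wf0 P -> wf0 Q -> wf0 S -> op0 P (op0 Q S) = op0 (op0 P Q) S.
Proof.
move=> hP hQ hS.
case: (eqVneq P.2 0) => p0; first by rewrite !(op0_l0 _ p0).
case: (eqVneq Q.2 0) => q0; first by rewrite (op0_l0 _ q0) (op0_r0 p0 q0).
have pq0 := op0_pos hP hQ p0.
case: (eqVneq S.2 0) => s0.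
  by rewrite (op0_r0 q0 s0) (op0_r0 pq0 s0).
have qs0 := op0_pos hQ hS q0.
rewrite (op0_op p0 qs0) (op0_op pq0 s0) !op0_op //.
apply: Hassoc; exact: wf0_pos.
Qed.

Lemma op0_comm P Q : wf0 P -> wf0 Q -> P.2 != 0 -> op0 P Q = op0 Q P.
Proof.
move=> hP hQ p0.
case: (eqVneq Q.2 0) => q0; first by rewrite (op0_r0 p0 q0) (op0_l0 _ q0).
rewrite !op0_op //; apply: Hcomm; exact: wf0_pos.
Qed.

Lemma op0_idem p u v : D p -> 0 <= u -> 0 <= v -> op0 (p, u) (p, v) = (p, u + v).
Proof.
move=> Dp u0 v0; rewrite /op0 /=.
case: (eqVneq u 0) => [->|un]; first by rewrite add0r.
case: (eqVneq v 0) => [->|vn]; first by rewrite addr0.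
have hu : wforecast D (p, u) by split => //=; rewrite lt_def un u0.
have hv : wforecast D (p, v) by split => //=; rewrite lt_def vn v0.
have := Hidem hu hv erefl; have := Hadd hu hv => /=.
by case: (op (p, u) (p, v)) => /= x y -> ->.
Qed.

Lemma op0_rearr B1 A1 B2 A2 : wf0 B1 -> wf0 A1 -> wf0 B2 -> wf0 A2 ->
  B1.2 + A1.2 != 0 ->
  op0 (op0 B1 A1) (op0 B2 A2) = op0 (op0 B1 B2) (op0 A1 A2).
Proof.
move=> h1 h2 h3 h4 n0.
rewrite (op0_assoc (op0_wf0 h1 h2) h3 h4) (op0_assoc (op0_wf0 h1 h3) h2 h4).
case: (eqVneq A1.2 0) => a0.
  have b0 : B1.2 != 0 by move: n0; rewrite a0 addr0.
  by rewrite (op0_r0 b0 a0) (op0_r0 (op0_pos h1 h3 b0) a0).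
congr (op0 _ A2).
rewrite -(op0_comm h2 h1 a0) -(op0_assoc h2 h1 h3).
exact: (op0_comm h2 (op0_wf0 h1 h3) a0).
Qed.

Lemma pr_ext_op0 p1 p2 (w : R * R) : w != (0, 0) ->
  pr_ext op p1 p2 w = (op0 (p1, w.1) (p2, w.2)).1.
Proof.
case: w => w1 w2 /= hw; rewrite /pr_ext /op0 /=.
case: (eqVneq w2 0) => [e2|n2].
  case: (eqVneq w1 0) => [e1|n1] //; move: hw; by rewrite e1 e2 eqxx.
by case: (eqVneq w1 0).
Qed.


Section AB.
Variables a b : R.
Hypothesis Hab : a < b.
Hypothesis Da : D a.
Hypothesis Db : D b.

Definition psi (w x : R) := (op0 (b, x) (a, w - x)).1.

Lemma Dint x : a <= x <= b -> D x.
Proof. case: HD => hI _ h; exact: hI Da Db x h. Qed.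

Definition Aset := [set w : R * R | 0 <= w.1 /\ 0 <= w.2 /\ w != (0, 0)].

Lemma psi_cont w : 0 < w -> {within `[0, w], continuous (psi w)}.
Proof.
move=> w0.
pose gam := fun x : R => (x, w - x).
have c1 : {within `[0, w], continuous gam}.
  apply: continuous_subspaceT => x.
  apply: (@cvg_pair _ _ _ _ (nbhs x) (nbhs (w - x))); first exact: cvg_id.
  apply: cvgB; [exact: cvg_cst | exact: cvg_id].
have maps : forall x, [set` `[0, w]] x -> Aset (gam x).
  move=> x /=; rewrite in_itv /= => /andP[h1 h2]; split => //=; split; first lra.
  by apply/eqP; case=> e1 e2; lra.
have c3 : {within Aset, continuous (pr_ext op b a)} := Hcont Db Da.
have c2 := @within_comp R _ _ `[0, w] Aset gam (pr_ext op b a) c1 maps c3.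
apply: subspace_eq_continuous c2 => x; rewrite inE /= in_itv /= => /andP[h1 h2].
rewrite /from_subspace /psi /gam /= pr_ext_op0 //.
by apply/eqP; case=> e1 e2; lra.
Qed.


Lemma psi_0 w : psi w 0 = a.
Proof. by rewrite /psi op0_l0. Qed.

Lemma psi_w w : 0 < w -> psi w w = b.
Proof. by move=> w0; rewrite /psi op0_r0 //= ?subrr // lt0r_neq0. Qed.

Lemma psi_open w x y : 0 < x -> x < y -> y < w -> psi w x < psi w y.
Proof.
move=> x0 xy yw; rewrite /psi !op0_op /=; try (apply: lt0r_neq0; lra).
have w0 : 0 < w by lra.
exact: (Hmono w0 Db Da Hab x0 xy yw).
Qed.

Lemma psi_strict w x y : 0 < w -> 0 <= x -> x < y -> y <= w -> psi w x < psi w y.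
Proof.
move=> w0; apply: strict_closed => //; first exact: psi_cont.
move=> ? ? ? ? ?; exact: psi_open.
Qed.

Lemma psi_le w x y : 0 < w -> 0 <= x -> x <= y -> y <= w -> psi w x <= psi w y.
Proof.
move=> w0 x0; rewrite le_eqVlt => /orP[/eqP -> //|xy] yw.
exact/ltW/psi_strict.
Qed.

Lemma psi_range w x : 0 < w -> 0 <= x <= w -> a <= psi w x <= b.
Proof.
move=> w0 /andP[h1 h2]; rewrite -{1}(psi_0 w) -(psi_w w0).
by rewrite !psi_le //; lra.
Qed.

Lemma psi_ex p w : a <= p <= b -> 0 < w -> exists x, 0 <= x <= w /\ psi w x = p.
Proof.
move=> hp w0.
have hv : psi w 0 <= p <= psi w w by rewrite psi_0 psi_w.
have [x hx px] := IVT' (ltW w0) (psi_cont w0) (or_introl hv).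
by exists x.
Qed.

Definition G p w := xget 0 [set x | 0 <= x <= w /\ psi w x = p].

Lemma G_spec p w : a <= p <= b -> 0 < w -> 0 <= G p w <= w /\ psi w (G p w) = p.
Proof.
move=> hp w0; exact: (@xgetPex _ 0 [set x | 0 <= x <= w /\ psi w x = p] (psi_ex hp w0)).
Qed.

Lemma G_uniq w x : 0 < w -> 0 <= x <= w -> G (psi w x) w = x.
Proof.
move=> w0 hx; apply: xget_unique => // y [hy e].
move: hx hy => /andP[x1 x2] /andP[y1 y2].
case: (ltgtP x y) => // h.
- by have := psi_strict w0 x1 h y2; rewrite e ltxx.
- by have := psi_strict w0 y1 h x2; rewrite e ltxx.
Qed.

Lemma wf0_b x : 0 <= x -> wf0 (b, x).
Proof. by split. Qed.
Lemma wf0_a x : 0 <= x -> wf0 (a, x).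
Proof. by split. Qed.

Lemma rep p w : a <= p <= b -> 0 < w -> op0 (b, G p w) (a, w - G p w) = (p, w).
Proof.
move=> hp w0; have [/andP[g1 g2] e] := G_spec hp w0.
have h2 : (op0 (b, G p w) (a, w - G p w)).2 = w.
  by rewrite op0_w /=; [lra | exact: wf0_b | apply: wf0_a; lra].
move: e h2; rewrite /psi; case: (op0 _ _) => /= x y -> ->.
done.
Qed.

Lemma mix p q u v : a <= p <= b -> a <= q <= b -> 0 < u -> 0 < v ->
  a <= (op (p, u) (q, v)).1 <= b /\
  G (op (p, u) (q, v)).1 (u + v) = G p u + G q v.
Proof.
move=> hp hq u0 v0.
have [/andP[x1 x2] e1] := G_spec hp u0.
have [/andP[y1 y2] e2] := G_spec hq v0.
have E : (op (p, u) (q, v)).1 = psi (u + v) (G p u + G q v).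
  rewrite -op0_op /=; try (apply: lt0r_neq0; lra).
  rewrite -(rep hp u0) -(rep hq v0).
  rewrite op0_rearr; last first.
  - by rewrite /=; apply: lt0r_neq0; lra.
  - by apply: wf0_a; lra.
  - by apply: wf0_b; lra.
  - by apply: wf0_a; lra.
  - by apply: wf0_b; lra.
  rewrite !op0_idem //; try lra.
  by rewrite /psi; congr (op0 _ (a, _)).1; lra.
rewrite E G_uniq; last (apply/andP; split; lra); last lra.
split => //; apply: psi_range; try lra; apply/andP; split; lra.
Qed.


Lemma G_add p u v : a <= p <= b -> 0 < u -> 0 < v -> G p (u + v) = G p u + G p v.
Proof.
move=> hp u0 v0; have [_ e] := mix hp hp u0 v0.
have Dp := Dint hp.
have hu : wforecast D (p, u) by [].
have hv : wforecast D (p, v) by [].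
by rewrite (Hidem hu hv erefl) in e.
Qed.

Lemma G_bnd p w : a <= p <= b -> 0 < w -> 0 <= G p w <= w.
Proof. by move=> hp w0; have [] := G_spec hp w0. Qed.

Lemma G_mono p w w' : a <= p <= b -> 0 < w -> w < w' -> G p w <= G p w'.
Proof.
move=> hp w0 ww.
have -> : w' = w + (w' - w) by ring.
rewrite G_add //; last lra.
have := G_bnd hp (_ : 0 < w' - w); lra.
Qed.

Lemma G_nat p w n : a <= p <= b -> 0 < w -> G p (n.+1%:R * w) = n.+1%:R * G p w.
Proof.
move=> hp w0; elim: n => [|n IH]; first by rewrite !mul1r.
have -> : (n.+2)%:R * w = n.+1%:R * w + w by rewrite -[n.+2]addn1 natrD mulrDl mul1r.
rewrite G_add // ?IH; last by apply: mulr_gt0.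
by rewrite -[n.+2]addn1 natrD mulrDl mul1r.
Qed.

Lemma G_rat p n k : a <= p <= b -> G p (n.+1%:R / k.+1%:R) = n.+1%:R / k.+1%:R * G p 1.
Proof.
move=> hp.
have k0 : 0 < k.+1%:R :> R by [].
have t0 : 0 < 1 / k.+1%:R :> R by rewrite divr_gt0.
have e1 : G p 1 = k.+1%:R * G p (1 / k.+1%:R).
  rewrite -G_nat //; congr G; field; lra.
have e2 : G p (n.+1%:R / k.+1%:R) = n.+1%:R * G p (1 / k.+1%:R).
  rewrite -G_nat //; congr G; field; lra.
rewrite e2 e1; field; lra.
Qed.

Lemma G_lin p w : a <= p <= b -> 0 < w -> G p w = w * G p 1.
Proof.
move=> hp w0.
have c0 : 0 <= G p 1 by have := G_bnd hp ltr01; case/andP.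
have Gw := G_bnd hp w0.
have Grat q : 0 < ratr q :> R -> G p (ratr q) = ratr q * G p 1.
  by move=> /rat_pos [n [k ->]]; apply: G_rat.
case: (ltgtP (G p w) (w * G p 1)) => // h; exfalso.
- have c1 : 0 < G p 1.
    rewrite lt_def c0 andbT; apply/eqP => e; move: h; rewrite e mulr0; lra.
  have lw : G p w / G p 1 < w by rewrite ltr_pdivrMr.
  have [q] := rat_in_itvoo lw; rewrite in_itv /= => /andP[q1 q2].
  have q0 : 0 < ratr q :> R.
    apply: le_lt_trans q1; apply: divr_ge0; lra.
  have := G_mono hp q0 q2; rewrite Grat //.
  have : G p w < ratr q * G p 1 by rewrite -ltr_pdivrMr.
  lra.
- case: (eqVneq (G p 1) 0) => c1.
  + have ww : w < w + 1 by lra.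
    have [q] := rat_in_itvoo ww; rewrite in_itv /= => /andP[q1 q2].
    have q0 : 0 < ratr q :> R by lra.
    have := G_mono hp w0 q1; rewrite Grat // c1 mulr0.
    move: h; rewrite c1 mulr0; lra.
  + have c2 : 0 < G p 1 by rewrite lt_def c1 c0.
    have lw : w < G p w / G p 1 by rewrite ltr_pdivlMr.
    have [q] := rat_in_itvoo lw; rewrite in_itv /= => /andP[q1 q2].
    have q0 : 0 < ratr q :> R by lra.
    have := G_mono hp w0 q1; rewrite Grat //.
    have : ratr q * G p 1 < G p w by rewrite -ltr_pdivlMr.
    lra.
Qed.

Definition gab p := G p 1.

Lemma gab_mean p q u v : a <= p <= b -> a <= q <= b -> 0 < u -> 0 < v ->
  a <= (op (p, u) (q, v)).1 <= b /\
  (u + v) * gab (op (p, u) (q, v)).1 = u * gab p + v * gab q.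
Proof.
move=> hp hq u0 v0; have [hr e] := mix hp hq u0 v0.
split => //; rewrite /gab -!G_lin //; lra.
Qed.

Lemma gab_a : gab a = 0.
Proof. by rewrite /gab -{1}(psi_0 1) G_uniq // lexx ler01. Qed.

Lemma gab_b : gab b = 1.
Proof. by rewrite /gab -{1}(psi_w ltr01) G_uniq // lexx ler01. Qed.

Lemma gab_psi p : a <= p <= b -> psi 1 (gab p) = p.
Proof. by move=> hp; have [] := G_spec hp ltr01. Qed.

Lemma gab_bnd p : a <= p <= b -> 0 <= gab p <= 1.
Proof. by move=> hp; have [] := G_spec hp ltr01. Qed.

Lemma gab_strict p q : a <= p -> p < q -> q <= b -> gab p < gab q.
Proof.
move=> h1 h2 h3.
have hp : a <= p <= b by apply/andP; split; lra.
have hq : a <= q <= b by apply/andP; split; lra.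
case: (ltP (gab p) (gab q)) => // h; exfalso.
have e1 : 0 <= gab q by have := gab_bnd hq; case/andP.
have e2 : gab p <= 1 by have := gab_bnd hp; case/andP.
have := psi_le ltr01 e1 h e2.
rewrite !gab_psi //; lra.
Qed.

Lemma psi_op w x : 0 < x -> x < w -> psi w x = (op (b, x) (a, w - x)).1.
Proof. move=> x0 xw; rewrite /psi op0_op //=; apply: lt0r_neq0; lra. Qed.

End AB.
End Forward.

Section Glue.
Variable R : realType.
Variable D : set R.
Variable op : R * R -> R * R -> R * R.
Hypothesis HD : forecast_domain D.
Hypothesis Hpool : pooling_op D op.
Hypothesis Hadd : pool_weight_additive D op.
Hypothesis Hcomm : pool_commutative_op D op.
Hypothesis Hassoc : pool_associative_op D op.
Hypothesis Hcont : pool_continuous_op D op.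
Hypothesis Hidem : pool_idempotent_op D op.
Hypothesis Hmono : pool_monotone_op D op.
Variables a0 b0 : R.
Hypothesis Hab0 : a0 < b0.
Hypothesis Da0 : D a0.
Hypothesis Db0 : D b0.

Let gab := gab op.
Let psi := psi op.

Lemma gmean c d p q u v : c < d -> D c -> D d -> c <= p <= d -> c <= q <= d -> 0 < u -> 0 < v ->
  c <= (op (p, u) (q, v)).1 <= d /\
  (u + v) * gab c d (op (p, u) (q, v)).1 = u * gab c d p + v * gab c d q.
Proof. move=> h1 h2 h3; exact: (gab_mean HD Hpool Hadd Hcomm Hassoc Hcont Hidem Hmono h1 h2 h3). Qed.

Lemma gstrict c d p q : c < d -> D c -> D d -> c <= p -> p < q -> q <= d -> gab c d p < gab c d q.
Proof. move=> h1 h2 h3; exact: (gab_strict Hcont Hmono h1 h2 h3). Qed.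

Lemma g_c c d : c < d -> D c -> D d -> gab c d c = 0.
Proof. move=> h1 h2 h3; exact: (gab_a Hcont Hmono h1 h2 h3). Qed.

Lemma g_d c d : c < d -> D c -> D d -> gab c d d = 1.
Proof. move=> h1 h2 h3; exact: (gab_b Hcont Hmono h1 h2 h3). Qed.

Lemma gbnd c d p : c < d -> D c -> D d -> c <= p <= d -> 0 <= gab c d p <= 1.
Proof. move=> h1 h2 h3; exact: (gab_bnd Hcont h2 h3). Qed.

Lemma gpsi c d p : c < d -> D c -> D d -> c <= p <= d -> psi c d 1 (gab c d p) = p.
Proof. move=> h1 h2 h3; exact: (gab_psi Hcont h2 h3). Qed.

Lemma gpsi_op c d x : 0 < x -> x < 1 ->
  psi c d 1 x = (op (d, x) (c, 1 - x)).1.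
Proof. exact: psi_op. Qed.


Lemma affine c d c' d' y : c < d -> D c -> D d -> c' < d' -> D c' -> D d' ->
  c <= c' -> d' <= d -> c' <= y <= d' ->
  gab c d y = gab c d c' + gab c' d' y * (gab c d d' - gab c d c').
Proof.
move=> cd Dc Dd cd' Dc' Dd' h1 h2 /andP[y1 y2].
have hy : c' <= y <= d' by apply/andP.
have [t0 t1] : 0 <= gab c' d' y /\ gab c' d' y <= 1 by apply/andP; exact: gbnd.
case: (eqVneq (gab c' d' y) 0) => [e0|n0].
  have -> : y = c'.
    case: (ltP c' y) => // h; last lra.
    by have := gstrict cd' Dc' Dd' (lexx c') h y2; rewrite g_c // e0 ltxx.
  by rewrite g_c // mul0r addr0.
case: (eqVneq (gab c' d' y) 1) => [e1|n1].
  have -> : y = d'.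
    case: (ltP y d') => // h; last lra.
    by have := gstrict cd' Dc' Dd' y1 h (lexx d'); rewrite g_d // e1 ltxx.
  rewrite g_d //; ring.
have t0' : 0 < gab c' d' y by rewrite lt_def n0 t0.
have t1' : gab c' d' y < 1 by rewrite lt_def eq_sym n1 t1.
have ey := gpsi cd' Dc' Dd' hy.
rewrite gpsi_op // in ey.
have hd' : c <= d' <= d by apply/andP; split; lra.
have hc' : c <= c' <= d by apply/andP; split; lra.
have u0 : 0 < 1 - gab c' d' y by lra.
have [_ e] := gmean cd Dc Dd hd' hc' t0' u0.
rewrite ey in e.
move: e; set t := gab c' d' y => e.
have -> : gab c d y = (t + (1 - t)) * gab c d y by rewrite addrC subrK mul1r.
rewrite e; ring.
Qed.

Definition ghat c d x := (gab c d x - gab c d a0) / (gab c d b0 - gab c d a0).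

Lemma ghat_cons c d c' d' y : c < d -> D c -> D d -> D c' -> D d' ->
  c <= c' -> c' <= a0 -> b0 <= d' -> d' <= d -> c' <= y <= d' ->
  ghat c d y = ghat c' d' y.
Proof.
move=> cd Dc Dd Dc' Dd' h1 h2 h3 h4 hy; have hab := Hab0.
have cd' : c' < d' by lra.
have ha : c' <= a0 <= d' by apply/andP; split; lra.
have hb : c' <= b0 <= d' by apply/andP; split; lra.
rewrite /ghat (affine cd Dc Dd cd' Dc' Dd' h1 h4 hy) (affine cd Dc Dd cd' Dc' Dd' h1 h4 ha) (affine cd Dc Dd cd' Dc' Dd' h1 h4 hb).
have B : 0 < gab c d d' - gab c d c'.
  by rewrite subr_gt0; apply: gstrict => //; lra.
have B' : 0 < gab c' d' b0 - gab c' d' a0.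
  by rewrite subr_gt0; apply: gstrict => //; lra.
move: B B'.
generalize (gab c d d') (gab c d c') (gab c' d' y) (gab c' d' a0) (gab c' d' b0).
move=> D1 C1 Y A1 B1 hB hB'.
have -> : C1 + B1 * (D1 - C1) - (C1 + A1 * (D1 - C1)) = (B1 - A1) * (D1 - C1) by ring.
have -> : C1 + Y * (D1 - C1) - (C1 + A1 * (D1 - C1)) = (Y - A1) * (D1 - C1) by ring.
rewrite -mulf_div divff ?mulr1 //; exact: lt0r_neq0.
Qed.


Lemma D_min x y : D x -> D y -> D (Num.min x y).
Proof. by move=> ? ?; rewrite minEle; case: ifP. Qed.
Lemma D_max x y : D x -> D y -> D (Num.max x y).
Proof. by move=> ? ?; rewrite maxEle; case: ifP. Qed.
Lemma mn_l (x y : R) : Num.min x y <= x. Proof. by rewrite ge_min lexx. Qed.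
Lemma mn_r (x y : R) : Num.min x y <= y. Proof. by rewrite ge_min lexx orbT. Qed.
Lemma mx_l (x y : R) : x <= Num.max x y. Proof. by rewrite le_max lexx. Qed.
Lemma mx_r (x y : R) : y <= Num.max x y. Proof. by rewrite le_max lexx orbT. Qed.

Definition gg x := ghat (Num.min x a0) (Num.max x b0) x.

Lemma gg_K z c d : c < d -> D c -> D d -> D z ->
  c <= Num.min z a0 -> Num.max z b0 <= d -> gg z = ghat c d z.
Proof.
move=> cd Dc Dd Dz h1 h2; symmetry; apply: ghat_cons => //.
- exact: D_min.
- exact: D_max.
- exact: mn_r.
- exact: mx_r.
- by rewrite mn_l mx_l.
Qed.

Lemma ghat_pos c d : c <= a0 -> b0 <= d -> D c -> D d ->
  0 < gab c d b0 - gab c d a0.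
Proof.
move=> h1 h2 Dc Dd; have hab := Hab0.
rewrite subr_gt0; apply: gstrict => //; lra.
Qed.

Lemma alg (u v Gr Gx Gy A B : R) : B != 0 -> (u + v) * Gr = u * Gx + v * Gy ->
  (u + v) * ((Gr - A) / B) = u * ((Gx - A) / B) + v * ((Gy - A) / B).
Proof. move=> Bn e; rewrite !mulrA -!mulrDl; congr (_ / _); rewrite mulrBr e; ring. Qed.

Section K.
Variables x y : R.
Hypotheses (Dx : D x) (Dy : D y).
Let c := Num.min (Num.min x y) a0.
Let d := Num.max (Num.max x y) b0.

Lemma K_c : c <= a0 /\ c <= x /\ c <= y.
Proof.
split; first exact: mn_r.
have := mn_l (Num.min x y) a0; rewrite -/c => h.
have := mn_l x y; have := mn_r x y; split; lra.
Qed.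

Lemma K_d : b0 <= d /\ x <= d /\ y <= d.
Proof.
split; first exact: mx_r.
have := mx_l (Num.max x y) b0; rewrite -/d => h.
have := mx_l x y; have := mx_r x y; split; lra.
Qed.

Lemma K_D : D c /\ D d.
Proof. by split; [apply: D_min => //; apply: D_min | apply: D_max => //; apply: D_max]. Qed.

Lemma K_cd : c < d.
Proof. have := K_c; have := K_d; have := Hab0; lra. Qed.

Lemma K_gg z : D z -> c <= z -> z <= d -> gg z = ghat c d z.
Proof.
move=> Dz h1 h2; have [Dc Dd] := K_D; have [c1 _] := K_c; have [d1 _] := K_d.
apply: gg_K => //; first exact: K_cd.
- by rewrite le_min h1 c1.
- by rewrite ge_max h2 d1.
Qed.

Lemma gg_mean_K u v : 0 < u -> 0 < v ->
  (u + v) * gg (op (x, u) (y, v)).1 = u * gg x + v * gg y.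
Proof.
move=> u0 v0.
have [Dc Dd] := K_D; have [c1 [c2 c3]] := K_c; have [d1 [d2 d3]] := K_d.
have cd := K_cd.
have hx : c <= x <= d by rewrite c2 d2.
have hy : c <= y <= d by rewrite c3 d3.
have [/andP[r1 r2] e] := gmean cd Dc Dd hx hy u0 v0.
have Dr : D (op (x, u) (y, v)).1 by have [] := Hpool (_ : wforecast D (x, u)) (_ : wforecast D (y, v)).
rewrite !K_gg // /ghat.
have B := ghat_pos c1 d1 Dc Dd.
apply: alg e; exact: lt0r_neq0.
Qed.

Lemma gg_strict_K : x < y -> gg x < gg y.
Proof.
move=> xy.
have [Dc Dd] := K_D; have [c1 [c2 c3]] := K_c; have [d1 [d2 d3]] := K_d.
rewrite !K_gg // /ghat.
have B := ghat_pos c1 d1 Dc Dd.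
rewrite ltr_pM2r ?invr_gt0 //.
rewrite ltrBlDr subrK; apply: gstrict => //; exact: K_cd.
Qed.

End K.


Lemma gg_strict x y : D x -> D y -> x < y -> gg x < gg y.
Proof. move=> Dx Dy; exact: gg_strict_K. Qed.

Lemma gg_mean x y u v : D x -> D y -> 0 < u -> 0 < v ->
  (u + v) * gg (op (x, u) (y, v)).1 = u * gg x + v * gg y.
Proof. move=> Dx Dy; exact: gg_mean_K. Qed.

Lemma gg_cont : {within D, continuous gg}.
Proof.
apply: mono_conv_cont; first exact: gg_strict.
move=> x y v Dx Dy /andP[h1 h2].
have xy : x < y.
  case: (ltgtP x y) => // h; first by have := gg_strict Dy Dx h; lra.
  by move: h1 h2; rewrite h; lra.
have gxy := gg_strict Dx Dy xy.
pose lam := (gg y - v) / (gg y - gg x).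
have den : 0 < gg y - gg x by lra.
have el : lam * (gg y - gg x) = gg y - v by rewrite /lam divfK //; apply: lt0r_neq0.
have l0 : 0 < lam by rewrite /lam divr_gt0 //; lra.
have l1 : lam < 1 by rewrite /lam ltr_pdivrMr // mul1r; lra.
have l1' : 0 < 1 - lam by lra.
exists (op (x, lam) (y, 1 - lam)).1.
  by have [] := Hpool (_ : wforecast D (x, lam)) (_ : wforecast D (y, 1 - lam)).
have := gg_mean Dx Dy l0 l1'.
rewrite addrC subrK mul1r => ->.
have -> : (1 - lam) * gg y = gg y - lam * gg y by ring.
move: el; rewrite mulrBr; lra.
Qed.

Lemma inv_gg x : D x -> inv_on D gg (gg x) = x.
Proof.
move=> Dx; apply: xget_unique => // y [Dy e].
case: (ltgtP y x) => // h.
- by have := gg_strict Dy Dx h; rewrite e ltxx.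
- by have := gg_strict Dx Dy h; rewrite e ltxx.
Qed.

Lemma pool_list P s : wforecast D P -> (forall Q, Q \in s -> wforecast D Q) ->
  pool_all op P s = qa_pool D gg (P :: s).
Proof.
elim: s P => [|Q s IH] [p w] hP hs.
  rewrite /pool_all /qa_pool /= big_seq1 /=.
  have [Dp w0] := hP.
  by rewrite big_seq1 /= mulrAC divff ?mul1r ?inv_gg // lt0r_neq0.
have hQ : wforecast D Q by apply: hs; rewrite inE eqxx.
have hs' : forall Q', Q' \in s -> wforecast D Q' by move=> Q' h; apply: hs; rewrite inE h orbT.
have hPQ := Hpool hP hQ.
rewrite /pool_all /= -/(pool_all op (op (p, w) Q) s) (IH _ hPQ hs').
rewrite /qa_pool !big_cons.
have ew := Hadd hP hQ.
case: Q hQ hs ew hPQ => q u hQ _ ew hPQ.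
have [Dp w0] := hP; have [Dq u0] := hQ.
have em := gg_mean Dp Dq w0 u0.
rewrite ew /= in em *.
by rewrite em !addrA.
Qed.

Lemma forward_main : exists g : R -> R, {within D, continuous g} /\
  (forall x y, D x -> D y -> x < y -> g x < g y) /\
  (forall P s, wforecast D P -> (forall Q, Q \in s -> wforecast D Q) ->
     pool_all op P s = qa_pool D g (P :: s)).
Proof.
exists gg; split; first exact: gg_cont.
split; first exact: gg_strict.
exact: pool_list.
Qed.

End Glue.

Lemma F_cont (R : realType) (c1 c2 : R) (w : R * R) : w.1 + w.2 != 0 ->
  {for w, continuous (fun w : R * R => (w.1 * c1 + w.2 * c2) / (w.1 + w.2))}.
Proof.
move=> hw.
have f1 : {for w, continuous (fun w : R * R => w.1)} by apply: cvg_fst.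
have f2 : {for w, continuous (fun w : R * R => w.2)} by apply: cvg_snd.
apply: (@continuousM _ _ (fun w : R * R => w.1 * c1 + w.2 * c2) (fun w : R * R => (w.1 + w.2)^-1)).
  apply: cvgD.
  apply: (@continuousM _ _ (fun w : R * R => w.1) (fun _ => c1)) => //; exact: cvg_cst.
  apply: (@continuousM _ _ (fun w : R * R => w.2) (fun _ => c2)) => //; exact: cvg_cst.
apply: (@continuousV _ _ (fun w : R * R => w.1 + w.2)) => //.
exact: cvgD.
Qed.

Lemma avg_bnd (R : realType) (u v A B : R) : 0 <= u -> 0 <= v -> 0 < u + v -> A <= B ->
  A <= (u * A + v * B) / (u + v) <= B.
Proof.
move=> u0 v0 uv AB; rewrite ler_pdivlMr // ler_pdivrMr //.
apply/andP; split; nra.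
Qed.

Section Rev.
Variable R : realType.
Variable D : set R.
Variable op : R * R -> R * R -> R * R.
Variable g : R -> R.
Hypothesis HD : forecast_domain D.
Hypothesis Hpool : pooling_op D op.
Hypothesis gcont : {within D, continuous g}.
Hypothesis gmono : forall x y, D x -> D y -> x < y -> g x < g y.
Hypothesis hlist : forall (P : R * R) (s : seq (R * R)),
  wforecast D P -> (forall Q, Q \in s -> wforecast D Q) ->
  pool_all op P s = qa_pool D g (P :: s).

Let h := inv_on D g.

Lemma hg x : D x -> h (g x) = x.
Proof.
move=> Dx; apply: xget_unique => // y [Dy e].
case: (ltgtP y x) => // hh.
- by have := gmono Dy Dx hh; rewrite e ltxx.
- by have := gmono Dx Dy hh; rewrite e ltxx.
Qed.

Lemma gle x y : D x -> D y -> g x <= g y -> x <= y.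
Proof.
move=> Dx Dy e; case: (leP x y) => // hh.
have := gmono Dy Dx hh; lra.
Qed.

Lemma img x y v : D x -> D y -> g x <= v <= g y -> exists z, D z /\ g z = v.
Proof.
move=> Dx Dy /andP[h1 h2].
have xy : x <= y by apply: gle => //; lra.
have [hI _] := HD.
have sub : `[x, y] `<=` D.
  move=> z /=; rewrite in_itv /= => hz; exact: hI Dx Dy z hz.
have cf : {within `[x, y], continuous g} by apply: continuous_subspaceW gcont.
have hv : g x <= v <= g y by apply/andP.
have [z hz e] := IVT' xy cf (or_introl hv).
by exists z; split => //; apply: hI Dx Dy z hz.
Qed.

Lemma gh v : (exists x y, D x /\ D y /\ g x <= v <= g y) -> D (h v) /\ g (h v) = v.
Proof.
move=> [x [y [Dx [Dy hv]]]].
have [z hz] := img Dx Dy hv.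
exact: (@xgetPex _ 0 [set z | D z /\ g z = v] (ex_intro _ z hz)).
Qed.

Definition avg (p q u v : R) := (u * g p + v * g q) / (u + v).

Lemma avg_img p q u v : D p -> D q -> 0 <= u -> 0 <= v -> 0 < u + v ->
  D (h (avg p q u v)) /\ g (h (avg p q u v)) = avg p q u v.
Proof.
move=> Dp Dq u0 v0 uv; apply: gh.
case: (leP (g p) (g q)) => e.
  by exists p, q; do 2 split => //; apply: avg_bnd.
exists q, p; do 2 split => //; rewrite /avg addrC [u + v]addrC.
apply: avg_bnd => //; [lra | exact: ltW].
Qed.

Lemma opE P Q : wforecast D P -> wforecast D Q ->
  op P Q = (h (avg P.1 Q.1 P.2 Q.2), P.2 + Q.2).
Proof.
move=> hP hQ.
have := hlist hP (_ : forall Q', Q' \in [:: Q] -> wforecast D Q').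
rewrite /pool_all /= /qa_pool big_cons big_seq1 big_cons big_seq1 => ->.
  by [].
by move=> Q'; rewrite inE => /eqP ->.
Qed.


Lemma wf_op P Q : wforecast D P -> wforecast D Q -> wforecast D (op P Q).
Proof. exact: Hpool. Qed.

Lemma rev_add : pool_weight_additive D op.
Proof. by move=> P Q hP hQ; rewrite opE. Qed.

Lemma rev_comm : pool_commutative_op D op.
Proof. by move=> P Q hP hQ; rewrite !opE // /avg addrC [Q.2 + _]addrC. Qed.

Lemma rev_idem : pool_idempotent_op D op.
Proof.
move=> [p u] [q v] hP hQ /= e.
have [Dp u0] := hP; have [_ v0] := hQ; simpl in *.
have n : u + v != 0 by apply: lt0r_neq0; lra.
by rewrite opE //= /avg -e -mulrDl mulrAC divff ?mul1r ?hg.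
Qed.

Lemma rev_assoc : pool_associative_op D op.
Proof.
move=> [p u] [q v] [r w] hP hQ hS.
have [Dp u0] := hP; have [Dq v0] := hQ; have [Dr w0] := hS.
rewrite [op (q, v) _]opE // [op (p, u) (q, v)]opE //=.
simpl in *.
have vw : 0 < v + w by lra.
have uv : 0 < u + v by lra.
have [D1 e1] := avg_img Dq Dr (ltW v0) (ltW w0) vw.
have [D2 e2] := avg_img Dp Dq (ltW u0) (ltW v0) uv.
have w1 : wforecast D (h (avg q r v w), v + w) by [].
have w2 : wforecast D (h (avg p q u v), u + v) by [].
rewrite (opE hP w1) (opE w2 hS) /=.
rewrite /avg e1 e2 /avg; congr (h _, _); last ring.
have n1 : v + w != 0 by apply: lt0r_neq0; lra.
have n2 : u + v != 0 by apply: lt0r_neq0; lra.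
rewrite [(v + w) * _]mulrC divfK // [(u + v) * _]mulrC divfK //.
by rewrite !addrA.
Qed.

Lemma rev_mono : pool_monotone_op D op.
Proof.
move=> w p1 p2 w0 D1 D2 p21 x y x0 xy yw.
have hx1 : wforecast D (p1, x) by [].
have hx2 : wforecast D (p2, w - x) by split => //=; lra.
have hy1 : wforecast D (p1, y) by split => //=; lra.
have hy2 : wforecast D (p2, w - y) by split => //=; lra.
rewrite !opE //=.
have k1 : 0 <= w - x by lra.
have k2 : 0 < x + (w - x) by lra.
have k3 : 0 <= y by lra.
have k4 : 0 <= w - y by lra.
have k5 : 0 < y + (w - y) by lra.
have [Da ea] := avg_img D1 D2 (ltW x0) k1 k2.
have [Db eb] := avg_img D1 D2 k3 k4 k5.
have lt : avg p1 p2 x (w - x) < avg p1 p2 y (w - y).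
  rewrite /avg !subrKC ?ltr_pM2r ?invr_gt0 //.
  have := gmono D2 D1 p21; nra.
case: (ltP (h (avg p1 p2 x (w - x))) (h (avg p1 p2 y (w - y)))) => // hh.
move: hh; rewrite le_eqVlt => /orP[/eqP e|e].
  by have := congr1 g e; rewrite ea eb; lra.
by have := gmono Db Da e; rewrite ea eb; lra.
Qed.


Lemma h_cont : {within g @` D, continuous h}.
Proof.
have [hI _] := HD.
apply: mono_conv_cont.
  move=> _ _ [x1 Dx1 <-] [x2 Dx2 <-] lt; rewrite !hg //.
  case: (ltP x1 x2) => // e; move: e; rewrite le_eqVlt => /orP[/eqP e|e].
    by move: lt; rewrite e ltxx.
  by have := gmono Dx2 Dx1 e; lra.
move=> _ _ t [x1 Dx1 <-] [x2 Dx2 <-]; rewrite !hg // => /andP[t1 t2].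
have ht : x1 <= t <= x2 by apply/andP; split; lra.
have Dt : D t := hI _ _ Dx1 Dx2 t ht.
by exists (g t); [exists t | rewrite hg].
Qed.

Lemma rev_cont : pool_continuous_op D op.
Proof.
move=> p1 p2 D1 D2.
pose F := fun w : R * R => (w.1 * g p1 + w.2 * g p2) / (w.1 + w.2).
pose A := [set w : R * R | 0 <= w.1 /\ 0 <= w.2 /\ w != (0, 0)].
have sum0 (w : R * R) : A w -> 0 < w.1 + w.2.
  case: w => w1 w2 [/= h1 [h2 hn]].
  case: (ltP 0 (w1 + w2)) => // e; exfalso; move/eqP: hn; apply.
  by congr pair; lra.
have Fcont : {within A, continuous F}.
  apply: continuous_in_subspaceT => w; rewrite inE => hw.
  by apply: F_cont; apply: lt0r_neq0; apply: sum0.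
have maps : forall w, A w -> (g @` D) (F w).
  move=> w hw; have [h1 [h2 _]] := hw.
  have [Dz ez] := avg_img D1 D2 h1 h2 (sum0 _ hw).
  by exists (h (F w)).
have comp := within_comp Fcont maps h_cont.
apply: subspace_eq_continuous comp => w; rewrite inE => hw.
have s0 := sum0 _ hw.
move: hw; case: w s0 => w1 w2 /= s0 [h1 [h2 hn]].
rewrite /from_subspace /= /pr_ext /=.
case: (eqVneq w2 0) => [e2|n2].
  have n1 : w1 != 0 by apply: lt0r_neq0; lra.
  by rewrite /F /= e2 mul0r !addr0 mulrAC divff ?mul1r ?hg.
case: (eqVneq w1 0) => [e1|n1].
  by rewrite /F /= e1 mul0r !add0r mulrAC divff ?mul1r ?hg.
have hx1 : wforecast D (p1, w1) by split => //=; rewrite lt_def n1 h1.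
have hx2 : wforecast D (p2, w2) by split => //=; rewrite lt_def n2 h2.
by rewrite opE.
Qed.

Lemma reverse_main : pool_weight_additive D op /\ pool_commutative_op D op /\
  pool_associative_op D op /\ pool_continuous_op D op /\
  pool_idempotent_op D op /\ pool_monotone_op D op.
Proof.
split; first exact: rev_add.
split; first exact: rev_comm.
split; first exact: rev_assoc.
split; first exact: rev_cont.
split; first exact: rev_idem.
exact: rev_mono.
Qed.

End Rev.

Theorem theorem6p6 (R : realType) (D : set R) (op : R * R -> R * R -> R * R) :
  forecast_domain D -> pooling_op D op ->
  (pool_weight_additive D op /\ pool_commutative_op D op /\ pool_associative_op D op /\
   pool_continuous_op D op /\ pool_idempotent_op D op /\ pool_monotone_op D op)
  <->
  (exists g : R -> R,
     {within D, continuous g} /\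
     (forall x y, D x -> D y -> x < y -> g x < g y) /\
     (forall (P : R * R) (s : seq (R * R)),
        wforecast D P -> (forall Q, Q \in s -> wforecast D Q) ->
        pool_all op P s = qa_pool D g (P :: s))).
Proof.
move=> HD Hpool; split.
- move=> [Hadd [Hcomm [Hassoc [Hcont [Hidem Hmono]]]]].
  have [_ [_ [a0 [b0 [Da0 [Db0 hab]]]]]] := HD.
  exact: (forward_main HD Hpool Hadd Hcomm Hassoc Hcont Hidem Hmono hab Da0 Db0).
- move=> [g [gc [gm hl]]]; exact: (reverse_main HD gc gm hl).
Qed.
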